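(* Let $\mathbf{L}=(L,\wedge,\vee)$ be a semidistributive lattice. Then $\mathbf{L}$ hypersatisfies the hyper-quasi-identity $$(F(x,y)=F(x,z))\rightarrow (F(x,y)=F(x,G(y,z))),$$ where $F$ and $G$ are binary hypervariables. Explicitly: for all binary lattice terms $p(x,y)$ and $q(x,y)$ and all $a,b,c\in L$, if $p^{\mathbf L}(a,b)=p^{\mathbf L}(a,c)$ then $p^{\mathbf L}(a,b)=p^{\mathbf L}(a,q^{\mathbf L}(b,c))$.
   Context: A lattice is join-semidistributive if it satisfies the quasi-identity $x\vee y=x\vee z \rightarrow x\vee y = x\vee(y\wedge z)$, and meet-semidistributive if it satisfies $x\wedge y=x\wedge z\rightarrow x\wedge y=x\wedge(y\vee z)$. A lattice is semidistributive if it is both join- and meet-semidistributive. A hyper-quasi-identity with hypervariables $F,G$ is hypersatisfied in an algebra if the quasi-identity obtained by substituting arbitrary terms of the type (of the corresponding arities, here binary lattice terms) for the hypervariables, leaving the individual variables unchanged, holds in the algebra for all values of the individual variables. *)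

(* Defs.v *)
From HB Require Import structures.
From mathcomp Require Import all_boot all_order.
Set Implicit Arguments. Unset Strict Implicit. Unset Printing Implicit Defensive.
Import Order.LTheory.
Local Open Scope order_scope.

Inductive lterm2 : Type :=
  | LVar0 : lterm2
  | LVar1 : lterm2
  | LMeet : lterm2 -> lterm2 -> lterm2
  | LJoin : lterm2 -> lterm2 -> lterm2.

Fixpoint leval {d : Order.disp_t} {L : latticeType d} (p : lterm2) (a b : L) : L :=
  match p with
  | LVar0 => a
  | LVar1 => b
  | LMeet p1 p2 => leval p1 a b `&` leval p2 a b
  | LJoin p1 p2 => leval p1 a b `|` leval p2 a b
  end.

Definition join_semidistributive {d : Order.disp_t} (L : latticeType d) : Prop :=
  forall x y z : L, x `|` y = x `|` z -> x `|` y = x `|` (y `&` z).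

Definition meet_semidistributive {d : Order.disp_t} (L : latticeType d) : Prop :=
  forall x y z : L, x `&` y = x `&` z -> x `&` y = x `&` (y `|` z).

Definition semidistributive {d : Order.disp_t} (L : latticeType d) : Prop :=
  join_semidistributive L /\ meet_semidistributive L.

(* Main.v *)
Require Import Defs.
From mathcomp Require Import all_boot all_order.
Import Order.LTheory.
Local Open Scope order_scope.

Ltac lsolve := match goal with
| |- is_true (?x <= ?x) => exact: lexx
| |- is_true (_ <= _ `&` _) => rewrite lexI; apply/andP; split; lsolve
| |- is_true (_ `|` _ <= _) => rewrite leUx; apply/andP; split; lsolve
| |- is_true (_ `&` _ <= _) =>
    first [apply: le_trans (leIl _ _) _; lsolve | apply: le_trans (leIr _ _) _; lsolve]
| |- is_true (_ <= _ `|` _) =>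
    first [apply: le_trans _ (leUl _ _); lsolve | apply: le_trans _ (leUr _ _); lsolve]
end.

Ltac eqsolve := apply: le_anti; apply/andP; split; lsolve.

Lemma nf (d : Order.disp_t) (L : latticeType d) (p : lterm2) :
  (forall a b : L, leval p a b = a) \/ (forall a b : L, leval p a b = b) \/
  (forall a b : L, leval p a b = a `&` b) \/ (forall a b : L, leval p a b = a `|` b).
Proof.
elim: p => [|| p1 IH1 p2 IH2 | p1 IH1 p2 IH2]; [by left | by right; left | |];
case: IH1 => [H1|[H1|[H1|H1]]]; case: IH2 => [H2|[H2|[H2|H2]]];
first [ left; move=> a b /=; rewrite H1 H2; eqsolve
      | right; left; move=> a b /=; rewrite H1 H2; eqsolve
      | right; right; left; move=> a b /=; rewrite H1 H2; eqsolve
      | right; right; right; move=> a b /=; rewrite H1 H2; eqsolve ].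
Qed.

Theorem proposition3p2 (d : Order.disp_t) (L : latticeType d) :
  semidistributive L ->
  forall (p q : lterm2) (a b c : L),
    leval p a b = leval p a c -> leval p a b = leval p a (leval q b c).
Proof.
move=> [JSD MSD] p q a b c.
have [Hq|[Hq|[Hq|Hq]]] := nf _ L q; rewrite Hq //;
have [Hp|[Hp|[Hp|Hp]]] := nf _ L p; rewrite !Hp // => H.
- by rewrite -H meetxx.
- by rewrite meetA H -meetA meetxx.
- exact: JSD.
- by rewrite -H joinxx.
- exact: MSD.
- by rewrite joinA H -joinA joinxx.
Qed.
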